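(* Let $n$ be a positive integer and let $G$ be a pure $(2n+1)$-sparse gapset of genus $g=3n+2$ with depth $q$. Then $q\le 3$. In particular, if $G$ is pseudo-symmetric, then $q=3$.
   Context: A gapset is a finite set $G\subset\mathbb{N}=\{1,2,\dots\}$ such that whenever $z\in G$ and $z=x+y$ with $x,y\in\mathbb{N}$, then $x\in G$ or $y\in G$; its genus is $g=\#G$. Writing $G=\{\ell_1<\dots<\ell_g\}$: multiplicity $m(G)=\min\{s\in\mathbb{N}:s\notin G\}$; conductor $c(G)=\min\{s\in\mathbb{N}: s+t\notin G\ \forall t\in\mathbb{N}_0\}$; Frobenius number $F(G)=c(G)-1=\ell_g$; depth $q(G)=\lceil c(G)/m(G)\rceil$. $G$ is pseudo-symmetric if $F(G)=2g-2$. $G$ is pure $\kappa$-sparse if $\ell_{i+1}-\ell_i\le\kappa$ for all $i$ with equality for some $i$. *)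

(* Defs.v *)
From mathcomp Require Import all_boot.
Set Implicit Arguments. Unset Strict Implicit. Unset Printing Implicit Defensive.

Definition is_gapset (G : seq nat) : Prop :=
  [/\ uniq G,
      (forall z, z \in G -> 0 < z) &
      (forall z x y, z \in G -> 0 < x -> 0 < y -> z = x + y ->
                     x \in G \/ y \in G)].

Definition genus (G : seq nat) : nat := size G.

(* conductor c(G): least s ≥ 1 with s + t ∉ G for all t ≥ 0,
   i.e. (max G) + 1, and 1 when G is empty *)
Definition conductor (G : seq nat) : nat := (\max_(x <- G) x).+1.

Definition frobenius (G : seq nat) : nat := (conductor G).-1.

Lemma mult_ex (G : seq nat) : exists s, (0 < s) && (s \notin G).
Proof.
exists (conductor G); apply/andP; split => //.
apply/negP => H.
have := @leq_bigmax_seq nat G predT (fun x => x) _ H isT.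
by rewrite /conductor ltnn.
Qed.

Definition multiplicity (G : seq nat) : nat := ex_minn (mult_ex G).

(* depth q(G) = ceil (c(G) / m(G)) *)
Definition depth (G : seq nat) : nat :=
  (conductor G + multiplicity G).-1 %/ multiplicity G.

Definition pseudo_symmetric (G : seq nat) : Prop :=
  frobenius G = 2 * genus G - 2.

Definition pure_sparse (k : nat) (G : seq nat) : Prop :=
  let l := sort leq G in
  (forall i, i.+1 < size l -> nth 0 l i.+1 - nth 0 l i <= k) /\
  (exists2 i, i.+1 < size l & nth 0 l i.+1 - nth 0 l i = k).

(* Main.v *)
Require Import Defs.
From mathcomp Require Import all_boot.
From mathcomp Require Import zify.

Lemma max_mem (s : seq nat) : s != [::] -> \max_(x <- s) x \in s.
Proof.
elim: s => // h t IH _; rewrite big_cons inE.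
case: t IH => [|h' t'] IH; first by rewrite big_nil maxn0 eqxx.
have /IH Hm : h' :: t' != [::] by [].
move: Hm; set M := (\max_(_ <- _) _) => Hm.
rewrite /maxn; case: ltnP => _; first by rewrite Hm orbT.
by rewrite eqxx.
Qed.

Lemma le_max (s : seq nat) x : x \in s -> x <= \max_(y <- s) y.
Proof. by move=> H; apply: (leq_bigmax_seq x). Qed.

Section S.
Variable G : seq nat.
Hypothesis gs : is_gapset G.

Lemma nongap_add x k : 0 < x -> x \notin G -> multiplicity G \notin G ->
  0 < multiplicity G -> x + k * multiplicity G \notin G.
Proof.
move=> x0 xG mG m0; elim: k => [|k IH]; first by rewrite mul0n addn0.
apply/negP => H; case: gs => _ _ /(_ _ (x + k * multiplicity G) (multiplicity G) H).
move=> /(_ _ m0) [] //; first by lia.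
  by rewrite mulSn; lia.
by move=> H'; move/negP: IH.
by move=> H'; move/negP: mG.
Qed.

Lemma frob_bound : size G > 0 -> frobenius G <= 2 * size G - 1.
Proof.
move=> sz.
set F := frobenius G.
have FG : F \in G.
  rewrite /F /frobenius /conductor /=; apply: max_mem; by case: G sz.
have leF : forall x, x \in G -> x <= F.
  by move=> x /le_max; rewrite /F /frobenius /conductor.
case: gs => uG posG add.
set s := iota 1 F.-1.
have h1 : (count (mem G) s).+1 <= size G.
  have -> : (count (mem G) s).+1 = size (F :: filter (mem G) s) by rewrite /= size_filter.
  apply: uniq_leq_size.
    rewrite /= filter_uniq ?iota_uniq // andbT mem_filter mem_iota; apply/negP.
    move=> /andP [_]; have := posG _ FG; lia.
  move=> y; rewrite inE mem_filter => /orP [/eqP -> // | /andP [] //].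
have h2 : count (predC (mem G)) s <= count (mem G) s.
  rewrite -!size_filter -(size_map (fun x => F - x)).
  apply: uniq_leq_size.
    rewrite map_inj_in_uniq ?filter_uniq ?iota_uniq //.
    move=> x y; rewrite !mem_filter !mem_iota => /andP [_ ?] /andP [_ ?]; lia.
  move=> y /mapP [x]; rewrite mem_filter mem_iota => /andP [/= xG xr] ->.
  rewrite mem_filter mem_iota; apply/andP; split; last by lia.
  have Fx : F = x + (F - x) by lia.
  case: (add F x (F - x) FG) => //; [lia | lia | by move=> H; rewrite H in xG].
have := count_predC (mem G) s; rewrite size_iota.
have := posG _ FG; lia.
Qed.

End S.

Theorem mainTheorem14 (n : nat) (G : seq nat) :
  0 < n -> is_gapset G -> pure_sparse (2 * n + 1) G -> genus G = 3 * n + 2 ->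
  depth G <= 3 /\ (pseudo_symmetric G -> depth G = 3).
Proof.
move=> n0 gs ps gen.
rewrite /genus in gen.
have gs' := gs; case: gs' => uG posG add.
have [m0 mG mmin] : [/\ 0 < multiplicity G, multiplicity G \notin G &
     forall x, 0 < x -> x < multiplicity G -> x \in G].
  rewrite /multiplicity; case: ex_minnP => m /andP [Hm1 Hm2] Hmin; split => //.
  move=> x x0 xm; apply/negPn/negP => xG.
  have := Hmin x; rewrite x0 xG /= => /(_ isT); lia.
set m := multiplicity G in m0 mG mmin *.
set F := frobenius G.
have FG : F \in G.
  rewrite /F /frobenius /conductor /=; apply: max_mem; apply/eqP => E; rewrite E /= in gen; lia.
have leF : forall x, x \in G -> x <= F.
  by move=> x /le_max; rewrite /F /frobenius /conductor.
have Fb := @frob_bound G gs ltac:(rewrite gen; lia); rewrite gen -/F in Fb; have {}Fb : F <= 6 * n + 3 by lia.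
have dE : depth G = (F + m) %/ m.
  by rewrite /depth /F /frobenius; congr (_ %/ _); rewrite /conductor /=; lia.
have [a [b [aG bG ab btw]]] : exists a b, [/\ a \in G, b \in G, b = a + (2 * n + 1) &
    forall x, x \in G -> a < x -> x < b -> False].
  case: ps => _ [i Hi Hd].
  set l := sort leq G in Hi Hd.
  have Hs : sorted leq l by apply: sort_sorted; exact: leq_total.
  exists (nth 0 l i), (nth 0 l i.+1); split.
  - by rewrite -(mem_sort leq) (mem_nth _ (ltnW Hi)).
  - by rewrite -(mem_sort leq) mem_nth.
  - by lia.
  move=> x xG ax xb.
  have xl : x \in l by rewrite mem_sort.
  have jl := xl; rewrite -index_mem in jl.
  have nx := nth_index 0 xl.
  case: (leqP (index x l) i) => Hj.
    have := sorted_leq_nth leq_trans leqnn 0 Hs.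
    move=> /(_ (index x l) i); rewrite !inE => /(_ jl); rewrite (ltn_trans _ Hi) //.
    move=> /(_ isT Hj); rewrite nx; lia.
  have := sorted_leq_nth leq_trans leqnn 0 Hs.
  move=> /(_ i.+1 (index x l)); rewrite !inE => /(_ Hi jl Hj); rewrite nx; lia.
have a0 := posG _ aG.
have m2 : 2 * n + 1 <= m.
  rewrite leqNgt; apply/negP => mlt.
  set r := (2 * n) %% m.
  set k := (2 * n) %/ m.
  have rm : r < m by rewrite ltn_pmod.
  have Hdiv : 2 * n = k * m + r by rewrite /k /r -divn_eq.
  have xG : a + 1 + r \notin G.
    apply/negP => H; apply: (btw _ H); lia.
  have := @nongap_add G gs (a + 1 + r) k ltac:(lia) xG mG m0.
  have -> : a + 1 + r + k * m = b by lia.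
  by rewrite bG.
have F3 : F < 3 * m.
  case: (leqP (2 * n + 2) m) => Hm; first by lia.
  have : 3 * m != F.
    apply/negP => /eqP E.
    have := @nongap_add G gs m 2 m0 mG mG m0.
    have -> : m + 2 * m = F by lia.
    by rewrite FG.
  lia.
have dle : depth G <= 3.
  rewrite dE -ltnS ltn_divLR //; lia.
split => // ps_sym.
rewrite /pseudo_symmetric -/F /genus gen in ps_sym.
apply/anti_leq; rewrite dle /= dE leq_divRL //.
suff : m <= 3 * n + 1 by lia.
rewrite leqNgt; apply/negP => mbig.
have mF : m <= F.
  have := uniq_leq_size (s1 := iota 1 m.-1) (s2 := G) (iota_uniq _ _).
  rewrite size_iota gen => H; suff : m.-1 <= 3 * n + 2 by lia.
  apply: H => y; rewrite mem_iota => Hy; apply: mmin; lia.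
set T := F :: iota 1 m.-1.
have uT : uniq T.
  by rewrite /= iota_uniq andbT mem_iota; lia.
have sT : {subset T <= G}.
  move=> y; rewrite inE mem_iota => /orP [/eqP -> // | H]; apply: mmin; lia.
have := uniq_leq_size uT sT; rewrite /= size_iota gen => Hsz.
have Gsub : forall y, y \in G -> y \in T.
  move=> y yG; apply/negPn/negP => yT.
  have H1 : uniq (y :: T) by rewrite cons_uniq yT uT.
  have H2 : {subset y :: T <= G} by move=> z; rewrite inE => /orP [/eqP -> // | /sT].
  have := uniq_leq_size H1 H2; rewrite /T /= size_iota gen; lia.
have := Gsub _ aG; have := Gsub _ bG; rewrite !inE !mem_iota.
case/orP => [/eqP bF | Hb].
  case/orP => [/eqP | ]; lia.
move=> _; have a1G : a + 1 \in G by apply: mmin; lia.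
apply: (btw _ a1G); lia.
Qed.
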